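(* Let $k\in\{2,3,4,5,6\}$ and let $n$ be a positive integer. With $\ell:=\lfloor (k+1)^2/4\rfloor$ and $q:=n\bmod \ell$, \[ \nu_k(K_{k+1,n}) \ge q\binom{\frac{n-q}{\ell}+1}{2} + (\ell-q)\binom{\frac{n-q}{\ell}}{2}. \]
   Context: A book with $k$ pages consists of a line (the spine) and $k$ half-planes (the pages) whose common boundary is the spine. A $k$-page drawing of a graph places all vertices on the spine and draws each edge inside a single page (edges may cross). $\nu_k(G)$ is the minimum number of crossings over all $k$-page drawings of $G$. Convention: $\binom{a}{b}=0$ whenever $a<b$. *)

(* Defs.v *)
From mathcomp Require Import all_boot all_fingroup.
Set Implicit Arguments. Unset Strict Implicit. Unset Printing Implicit Defensive.

(* Complete bipartite graph K_{m,n}: vertices 'I_m + 'I_n, edges 'I_m * 'I_n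
   (edge (i,j) joins inl i and inr j). *)
Definition bvert (m n : nat) := ('I_m + 'I_n)%type.
Definition bedge (m n : nat) := ('I_m * 'I_n)%type.

(* A k-page drawing (combinatorial form): a linear order of the vertices along
   the spine, given by a permutation of the vertex set (vertex v sits at
   position enum_rank (sigma v)), together with a page for each edge. *)
Definition drawing (k m n : nat) := ({perm bvert m n} * {ffun bedge m n -> 'I_k})%type.

Section Draw.
Variables (k m n : nat).

Definition pos (d : drawing k m n) (v : bvert m n) : nat := enum_rank (d.1 v).

Definition lo (d : drawing k m n) (e : bedge m n) : nat :=
  minn (pos d (inl e.1)) (pos d (inr e.2)).
Definition hi (d : drawing k m n) (e : bedge m n) : nat :=
  maxn (pos d (inl e.1)) (pos d (inr e.2)).

(* e and f (same page) cross iff their endpoints strictly interleave along the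
   spine; the asymmetric condition counts each unordered crossing pair once. *)
Definition crossb (d : drawing k m n) (e f : bedge m n) : bool :=
  (d.2 e == d.2 f) && [&& lo d e < lo d f, lo d f < hi d e & hi d e < hi d f].

Definition crossings (d : drawing k m n) : nat :=
  #|[set ef : bedge m n * bedge m n | crossb d ef.1 ef.2]|.
End Draw.

(* nu_k(K_{m,n}): minimum number of crossings over all k-page drawings
   (the default #|E|^2 is an upper bound on every crossing count and is only
   returned when there is no drawing, i.e. k = 0). *)
Definition nu (k m n : nat) : nat :=
  \big[minn/(m * n) ^ 2]_(d : drawing k m n) crossings d.

(* Main.v *)
Require Import Defs.
From mathcomp Require Import all_boot all_fingroup.
From mathcomp Require Import zify.
From Stdlib Require Import Classical.
Set Implicit Arguments. Unset Strict Implicit. Unset Printing Implicit Defensive.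


Definition xc (e f : nat * nat) : bool :=
  let lo := minn e.1 e.2 in let hi := maxn e.1 e.2 in
  let lo' := minn f.1 f.2 in let hi' := maxn f.1 f.2 in
  [&& lo < lo', lo' < hi & hi < hi'] || [&& lo' < lo, lo < hi' & hi' < hi].

Definition chords (w : seq bool) : seq (nat * nat) :=
  [seq ij <- [seq (i, j) | i <- iota 0 (size w), j <- iota 0 (size w)]
     | nth false w ij.1 && ~~ nth false w ij.2].

Fixpoint ltb (m n : nat) : bool :=
  match m, n with _, 0 => false | 0, _.+1 => true | m'.+1, n'.+1 => ltb m' n' end.
Fixpoint eqb (m n : nat) : bool :=
  match m, n with 0, 0 => true | m'.+1, n'.+1 => eqb m' n' | _, _ => false end.
Fixpoint memn (x : nat) (s : seq nat) : bool :=
  if s is y :: s' then (if eqb x y then true else memn x s') else false.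

Lemma ltbE m n : ltb m n = (m < n).
Proof. by elim: m n => [|m IH] [|n] //=; rewrite IH. Qed.
Lemma eqbE m n : eqb m n = (m == n).
Proof. by elim: m n => [|m IH] [|n] //=; rewrite IH. Qed.
Lemma memnE x s : memn x s = (x \in s).
Proof. by elim: s => [|y s IH] //=; rewrite inE eqbE IH; case: (x == y). Qed.

Definition mm (e : nat * nat) : nat * nat := if ltb e.1 e.2 then e else (e.2, e.1).
Definition xc' (e f : nat * nat) : bool :=
  if ltb e.1 f.1 then (if ltb f.1 e.2 then ltb e.2 f.2 else false)
  else if ltb f.1 e.1 then (if ltb e.1 f.2 then ltb f.2 e.2 else false) else false.

Lemma xc'_xc e f : xc' (mm e) (mm f) -> xc e f.
Proof.
case: e f => [a b] [c d]; rewrite /xc' /mm /xc /= !ltbE.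
case: (ltnP a b) => hab; case: (ltnP c d) => hcd /=; rewrite ?ltbE;
  repeat case: ifP; lia.
Qed.

Definition mkrows (chs : seq (nat * nat)) : seq (seq bool) :=
  let mch := map mm chs in
  [seq [seq xc' e f | f <- mch] | e <- mch].

Fixpoint lhas (T : Type) (p : T -> bool) (s : seq T) : bool :=
  if s is x :: s' then (if p x then true else lhas p s') else false.

Lemma lhasP (T : eqType) (p : T -> bool) s x : x \in s -> p x -> lhas p s.
Proof.
elim: s => [|y s IH] //=; rewrite inE => /orP [/eqP <- -> //|xs px].
by case: (p y) => //; apply: IH.
Qed.

Lemma lhasE (T : Type) (p : T -> bool) s : lhas p s -> exists2 x, List.In x s & p x.
Proof.
elim: s => [|y s IH] //=; case E: (p y) => H; first by exists y => //; left.
by case: (IH H) => x h1 h2; exists x => //; right.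
Qed.

Fixpoint popc (s : seq bool) : nat := if s is b :: s' then b + popc s' else 0.

Fixpoint pick_aux (i : nat) (pa : seq (option nat)) (hs : seq (seq bool)) (ds : seq nat)
   (best : option nat) (bs bd : nat) : option nat :=
  match pa, hs, ds with
  | o :: pa', h :: hs', d :: ds' =>
     if o is None then
       let s := popc h in
       if best is None then pick_aux i.+1 pa' hs' ds' (Some i) s d else
       if ltb bs s then pick_aux i.+1 pa' hs' ds' (Some i) s d else
       if (if eqb bs s then ltb bd d else false) then pick_aux i.+1 pa' hs' ds' (Some i) s d
       else pick_aux i.+1 pa' hs' ds' best bs bd
     else pick_aux i.+1 pa' hs' ds' best bs bd
  | _, _, _ => best
  end.

Fixpoint forbs (row : seq bool) (pa : seq (option nat)) : seq nat :=
  match row, pa with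
  | b :: row', o :: pa' => if b then (if o is Some c then c :: forbs row' pa' else forbs row' pa')
                           else forbs row' pa'
  | _, _ => [::]
  end.

Fixpoint upd_hs (row : seq bool) (hs : seq (seq bool)) (c : nat) : seq (seq bool) :=
  match row, hs with
  | b :: row', h :: hs' => (if b then set_nth false h c true else h) :: upd_hs row' hs' c
  | _, _ => hs
  end.

Fixpoint dfs (fuel : nat) (rows : seq (seq bool)) (ds : seq nat) (k : nat) (pa : seq (option nat))
  (used : nat) (hs : seq (seq bool)) : bool :=
  match fuel with
  | 0 => true
  | f.+1 =>
    match pick_aux 0 pa hs ds None 0 0 with
    | None => true
    | Some v =>
      if nth None pa v is Some _ then true else
      let row := nth [::] rows v in
      let forb := forbs row pa in
      lhas (fun c => if memn c forb then false else
             dfs f rows ds k (set_nth None pa v (Some c)) (if ltb c used then used else c.+1)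
               (upd_hs row hs c))
          (iota 0 (if ltb used k then used.+1 else k))
    end
  end.

Definition uncol (k : nat) (w : seq bool) : bool :=
  let chs := chords w in let N := size chs in let rows := mkrows chs in
  ~~ dfs N.+1 rows [seq count id r | r <- rows] k (nseq N None) 0 (nseq N (nseq k false)).

Definition proper (rows : seq (seq bool)) (col : nat -> nat) :=
  forall v u, nth false (nth [::] rows v) u -> col u != col v.

Lemma forbsP row pa c : c \in forbs row pa ->
  exists u, nth false row u /\ nth None pa u = Some c.
Proof.
elim: row pa => [|b row IH] [|o pa] //=.
case: b; last by move=> /IH [u [h1 h2]]; exists u.+1.
case: o => [c'|]; last by move=> /IH [u [h1 h2]]; exists u.+1.
rewrite inE => /orP [/eqP ->|]; first by exists 0.
by move=> /IH [u [h1 h2]]; exists u.+1.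
Qed.

Lemma dfs_complete k rows ds fuel : forall pa used hs col,
  proper rows col -> (forall v, col v < k) ->
  (forall v c, nth None pa v = Some c -> col v = c /\ c < used) ->
  dfs fuel rows ds k pa used hs.
Proof.
elim: fuel => [|f IH] pa used hs col Hp Hk Ha //=.
case: (pick_aux 0 pa hs ds None 0 0) => [v|//].
case E: (nth None pa v) => [//|].
set row := nth [::] rows v; set forb := forbs row pa.
have Hv := Hk v.
case: (ltnP (col v) used) => hcu.
- apply: (@lhasP _ _ _ (col v)).
    rewrite mem_iota /= add0n ltbE; case: ifP => // _; lia.
  rewrite memnE.
  case Hf: (col v \in forb).
    case: (forbsP Hf) => u [hu hpu]; have [h1 _] := Ha _ _ hpu.
    by move: (Hp v u hu); rewrite h1 eqxx.
  rewrite ltbE hcu; apply: (IH _ _ _ col) => // v' c.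
  rewrite nth_set_nth /=; case: eqP => [-> [<-]|_ /Ha] //.
- set c0 := col v.
  pose sw x := if x == c0 then used else if x == used then c0 else x.
  have swinj : injective sw.
    rewrite /sw => x y; case: (x =P c0); case: (x =P used); case: (y =P c0); case: (y =P used); lia.
  apply: (@lhasP _ _ _ used).
    rewrite mem_iota /= add0n ltbE; case: ifP => //; lia.
  rewrite memnE.
  case Hf: (used \in forb).
    case: (forbsP Hf) => u [hu hpu]; have [_ h2] := Ha _ _ hpu; lia.
  rewrite ltbE ltnn; apply: (IH _ _ _ (sw \o col)).
  + move=> x y hxy /=; apply/negP => /eqP /swinj /eqP; apply/negP; exact: Hp.
  + move=> x /=; rewrite /sw; case: eqP => _; first lia.
    case: eqP => _ //; exact: Hk.
  + move=> v' c; rewrite nth_set_nth /=; case: eqP => [-> [<-]|_ /Ha [h1 h2]].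
      by rewrite /sw eqxx.
    rewrite /sw h1; split; last lia.
    case: eqP => [hc|]; first lia.
    by case: eqP => [hc|]; first lia.
Qed.

Lemma uncol_sound k w : uncol k w -> forall col, (forall v, col v < k) ->
  ~ proper (mkrows (chords w)) col.
Proof.
rewrite /uncol => /negP H col Hk Hp; apply: H.
apply: (@dfs_complete k _ _ _ _ 0 _ col Hp Hk) => v c; by rewrite nth_nseq; case: ifP.
Qed.


Definition Good (k : nat) (w : seq bool) :=
  forall p : nat -> nat -> nat, (forall i j, p i j < k) ->
  exists i j i' j', [/\ [&& i < size w, j < size w, i' < size w & j' < size w],
     [&& nth false w i, ~~ nth false w j, nth false w i' & ~~ nth false w j'],
     xc (i, j) (i', j') & p i j = p i' j'].

Lemma mem_chords w i j : (i, j) \in chords w ->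
  [/\ i < size w, j < size w, nth false w i & ~~ nth false w j].
Proof.
rewrite mem_filter /= => /andP [/andP [h1 h2] /allpairsP [[x y] [hx hy [ex ey]]]].
subst x y; by move: hx hy; rewrite !mem_iota !add0n /= => -> ->.
Qed.

Lemma nth_mkrows chs v u : nth false (nth [::] (mkrows chs) v) u =
  [&& v < size chs, u < size chs & xc' (mm (nth (0,0) chs v)) (mm (nth (0,0) chs u))].
Proof.
rewrite /mkrows /=.
case: (ltnP v (size chs)) => hv /=; last by rewrite (nth_default [::]) ?size_map // nth_nil.
rewrite (nth_map (0,0) [::]) ?size_map // (nth_map (0,0) (0,0)) //.
case: (ltnP u (size chs)) => hu /=; last by rewrite (nth_default false) ?size_map.
by rewrite (nth_map (0,0) false) ?size_map // (nth_map (0,0) (0,0)).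
Qed.

Lemma uncol_good k w : uncol k w -> Good k w.
Proof.
move=> H p Hp.
apply: NNPP => Hn.
set chs := chords w.
pose col v := p (nth (0,0) chs v).1 (nth (0,0) chs v).2.
apply: (uncol_sound H (col := col)) => [v|v u]; first exact: Hp.
rewrite nth_mkrows => /and3P [hv hu /xc'_xc hx].
apply/negP => /eqP he; apply: Hn.
move: (mem_nth (0,0) hv) (mem_nth (0,0) hu) hx he; rewrite /col.
case: (nth (0,0) chs v) => i j; case: (nth (0,0) chs u) => i' j' /= hu' hv' hx he.
case/mem_chords: hu' => a1 a2 a3 a4; case/mem_chords: hv' => b1 b2 b3 b4.
by exists i, j, i', j'; split => //; rewrite ?a1 ?a2 ?a3 ?a4 ?b1 ?b2 ?b3 ?b4.
Qed.

Lemma xc_rot L i j i' j' : i < L -> j < L -> i' < L -> j' < L -> xc (i, j) (i', j') ->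
  let g x := if x.+1 < L then x.+1 else 0 in xc (g i, g j) (g i', g j').
Proof.
move=> hi hj hi' hj'; rewrite /xc /=.
case: (ltnP i.+1 L) => h1; case: (ltnP j.+1 L) => h2;
case: (ltnP i'.+1 L) => h3; case: (ltnP j'.+1 L) => h4; lia.
Qed.

Lemma xc_rev L i j i' j' : i < L -> j < L -> i' < L -> j' < L -> xc (i, j) (i', j') ->
  xc (L - i.+1, L - j.+1) (L - i'.+1, L - j'.+1).
Proof. move=> hi hj hi' hj'; rewrite /xc /=; lia. Qed.

Lemma Good_rot k w : Good k (rot 1 w) -> Good k w.
Proof.
case: w => [|x w]; first by [].
rewrite rot1_cons => H p Hp.
set L := size (x :: w).
pose g y := if y.+1 < L then y.+1 else 0.
have gE y : y < L -> nth false (rcons w x) y = nth false (x :: w) (g y).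
  rewrite /g /L /= nth_rcons => hy; case: ltnP => h1; first by case: ltnP => //; lia.
  have -> : y = size w by lia.
  by rewrite eqxx; case: ltnP => //; lia.
have gL y : g y < L by rewrite /g; case: ifP => //; rewrite /L.
case: (H (fun i j => p (g i) (g j)) (fun i j => Hp _ _)) => i [j [i' [j' [h1 h2 h3 h4]]]].
have sz : size (rcons w x) = L by rewrite size_rcons.
move: h1 h2; rewrite sz => /and4P [b1 b2 b3 b4].
rewrite !gE // => h2.
exists (g i), (g j), (g i'), (g j'); split => //.
  by rewrite !gL.
exact: xc_rot.
Qed.

Lemma Good_rev k w : Good k (rev w) -> Good k w.
Proof.
move=> H p Hp.
set L := size w.
pose g y := L - y.+1.
have gE y : y < L -> nth false (rev w) y = nth false w (g y) by move=> hy; rewrite nth_rev.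
have gL y : y < L -> g y < L by rewrite /g; lia.
case: (H (fun i j => p (g i) (g j)) (fun i j => Hp _ _)) => i [j [i' [j' [h1 h2 h3 h4]]]].
move: h1 h2; rewrite size_rev -/L => /and4P [b1 b2 b3 b4].
rewrite !gE // => h2.
exists (g i), (g j), (g i'), (g j'); split => //.
  by rewrite !gL.
exact: xc_rev.
Qed.

Lemma Good_iter k t w : Good k (iter t (rot 1) w) -> Good k w.
Proof. elim: t => [|t IH] //= H; apply: IH; exact: Good_rot. Qed.

Fixpoint rotsf (n : nat) (w : seq bool) : seq (seq bool) :=
  if n is n'.+1 then w :: rotsf n' (rot 1 w) else [::].

Lemma rotsfP n w x : List.In x (rotsf n w) -> exists t, x = iter t (rot 1) w.
Proof.
elim: n w => [|n IH] w //= [<-|]; first by exists 0.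
by move=> /IH [t ->]; exists t.+1; rewrite iterSr.
Qed.

Inductive trie := TLeaf of bool | TNode of trie & trie.
Fixpoint tmem (t : trie) (w : seq bool) : bool :=
  match t, w with
  | TLeaf b, [::] => b
  | TNode t1 t0, x :: w' => if x then tmem t1 w' else tmem t0 w'
  | _, _ => false
  end.
Fixpoint tins (t : trie) (w : seq bool) : trie :=
  match w with
  | [::] => match t with TLeaf _ => TLeaf true | _ => t end
  | x :: w' =>
    match t with
    | TNode t1 t0 => if x then TNode (tins t1 w') t0 else TNode t1 (tins t0 w')
    | TLeaf _ => if x then TNode (tins (TLeaf false) w') (TLeaf false)
                 else TNode (TLeaf false) (tins (TLeaf false) w')
    end
  end.

Lemma tmem_false w : tmem (TLeaf false) w = false. Proof. by case: w. Qed.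

Lemma tinsP t x w : tmem (tins t x) w -> w = x \/ tmem t w.
Proof.
elim: x t w => [|y x IH] t w.
  case: t => [b|t1 t0] /=; last by right.
  by case: w => //= _; left.
case: t => [b|t1 t0]; case: w => [|z w].
- by case: y.
- case: y; case: z => /= H; try by case: (w) H.
  + by case/IH: H => [->|]; [left|rewrite tmem_false].
  + by case/IH: H => [->|]; [left|rewrite tmem_false].
- by case: y.
- case: y; case: z => /= H; try by right.
  + by case/IH: H => [->|]; [left|right].
  + by case/IH: H => [->|]; [left|right].
Qed.

Definition build (C : seq (seq bool)) : trie := foldl tins (TLeaf false) C.

Lemma buildP C w : tmem (build C) w -> w \in C.
Proof.
rewrite /build.
suff H : forall t, tmem (foldl tins t C) w -> w \in C \/ tmem t w.
  by move/H => [//|]; rewrite tmem_false.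
elim: C => [|x C IH] t /=; first by right.
move/IH => [h|]; first by left; rewrite inE h orbT.
by move/tinsP => [->|]; [left; rewrite inE eqxx|right].
Qed.

Fixpoint wl (L a : nat) : seq (seq bool) :=
  match L with
  | 0 => if a is 0 then [:: [::]] else [::]
  | L'.+1 => map (cons false) (wl L' a) ++ (if a is a'.+1 then map (cons true) (wl L' a') else [::])
  end.

Lemma wlP w : w \in wl (size w) (count id w).
Proof.
elim: w => [|x w IH] //=; case: x => /=.
  by rewrite add1n mem_cat; apply/orP; right; rewrite mem_map // => ? ? [].
by rewrite add0n mem_cat mem_map ?IH // => ? ? [].
Qed.

Fixpoint lexle (u v : seq bool) : bool :=
  match u, v with
  | [::], _ => true
  | _, [::] => false
  | x :: u', y :: v' => if x == y then lexle u' v' else (~~ x)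
  end.

Definition is_canon (L : nat) (w : seq bool) : bool :=
  all (lexle w) (rotsf L w ++ rotsf L (rev w)).

Definition fincheck (k m nb : nat) : bool :=
  let L := m + nb in
  let W := wl L m in
  let C := [seq w <- W | is_canon L w] in
  let T := build C in
  all (uncol k) C && all (fun w => lhas (tmem T) (rotsf L w ++ rotsf L (rev w))) W.

Lemma fincheckP k m nb : fincheck k m nb -> forall w, size w = m + nb -> count id w = m -> Good k w.
Proof.
rewrite /fincheck => /andP [/allP H1 /allP H2] w hs hc.
have hw : w \in wl (m + nb) m by rewrite -hs -hc wlP.
have := H2 w hw => /lhasE [x hx /buildP hxC].
have hg := uncol_good (H1 x hxC).
case: (List.in_app_or _ _ _ hx) => /rotsfP [t ht]; subst x.
  exact: Good_iter hg.
by apply: Good_rev; apply: Good_iter hg.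
Qed.


Definition F (n l : nat) : nat := \sum_(i < n) i %/ l.

Lemma F_S n l : F n.+1 l = F n l + n %/ l.
Proof. by rewrite /F big_ord_recr. Qed.

Lemma F0 l : F 0 l = 0. Proof. by rewrite /F big_ord0. Qed.

Lemma F1 n : F n 1 = 'C(n, 2).
Proof.
rewrite -bin2_sum /F big_mkord; apply: eq_bigr => i _; exact: divn1.
Qed.

Lemma bin2S s : 'C(s.+1, 2) = 'C(s, 2) + s.
Proof. by rewrite binS bin1. Qed.

Lemma bin2_double s : 2 * 'C(s.+1, 2) = s.+1 * s.
Proof. elim: s => [|s IH]; first by []. rewrite bin2S mulnDr IH; lia. Qed.

Lemma F_rec l : 0 < l -> forall n s, s <= n -> F n l.+1 <= 'C(s, 2) + F (n - s) l.
Proof.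
move=> hl; elim => [|n IH] s hs.
  have -> : s = 0 by lia. by rewrite F0.
rewrite F_S.
set Q := n %/ l.+1.
have hQ : Q * l.+1 <= n by apply: leq_trunc_div.
case: (boolP ((0 < s) && (Q <= s.-1))) => [/andP [hs0 hq]|hA].
  have := IH s.-1 ltac:(lia).
  have -> : n - s.-1 = n.+1 - s by lia.
  have -> : 'C(s, 2) = 'C(s.-1, 2) + s.-1 by case: (s) hs0 => // s' _; rewrite bin2S.
  lia.
case: (boolP ((s <= n) && (Q <= (n - s) %/ l))) => [/andP [hsn hq]|hB].
  have := IH s hsn.
  have -> : n.+1 - s = (n - s).+1 by lia.
  rewrite F_S; lia.
exfalso.
have hsQ : s <= Q by move: hA; case: (s) => //= s'; lia.
case: (leqP s n) => hsn; last first.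
  have : Q <= n by apply: leq_div.
  lia.
move: hB; rewrite hsn /= -ltnNge ltn_divLR // => h.
rewrite mulnS in hQ. lia.
Qed.

Lemma F_formula l n : 0 < l ->
  n %% l * 'C((n - n %% l) %/ l + 1, 2) + (l - n %% l) * 'C((n - n %% l) %/ l, 2) = F n l.
Proof.
move=> hl.
have key : forall Q q, q <= l -> F (Q * l + q) l = l * 'C(Q, 2) + q * Q.
  elim => [|Q IHQ] q hq.
    rewrite mul0n add0n muln0 addn0 (_ : 'C(0,2) = 0) // muln0.
    elim: q hq => [|q IHq] hq; first by rewrite F0.
    rewrite F_S IHq ?divn_small; lia.
  elim: q hq => [|q IHq] hq.
    rewrite addn0 mulSnr IHQ // bin2S; lia.
  rewrite addnS F_S IHq; last lia.
  rewrite divnMDl // divn_small; last lia.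
  lia.
have h1 : (n - n %% l) %/ l = n %/ l.
  by rewrite {1}(divn_eq n l) addnK mulnK.
rewrite h1 [in RHS](divn_eq n l) key; last by apply: ltnW; rewrite ltn_mod.
rewrite addn1 bin2S.
have : n %% l <= l by apply: ltnW; rewrite ltn_mod.
set q := n %% l; set Q := n %/ l; set c := 'C(Q, 2).
nia.
Qed.

Lemma F_le_sq l n : F n l <= n * n.
Proof.
rewrite /F; apply: leq_trans (_ : \sum_(i < n) n <= _).
  apply: leq_sum => i _; apply: leq_trans (leq_div _ _) _; exact: ltnW.
by rewrite sum_nat_const card_ord.
Qed.

Section Turan.
Variables (T : finType) (e : rel T).
Hypotheses (esym : symmetric e) (eirr : irreflexive e).

Definition Ecard (V : {set T}) := #|[set p : T * T | [&& p.1 \in V, p.2 \in V & e p.1 p.2]]|.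
Definition alpha_le (V : {set T}) (l : nat) :=
  forall I : {set T}, I \subset V -> (forall x y, x \in I -> y \in I -> ~~ e x y) -> #|I| <= l.
Definition deg (V : {set T}) x := #|[set y in V | e x y]|.

Lemma turan N : forall (V : {set T}) l, #|V| <= N -> alpha_le V l -> 2 * F #|V| l <= Ecard V.
Proof.
elim: N => [|N IH] V l hN ha.
  have -> : #|V| = 0 by lia. by rewrite F0.
case: (set_0Vmem V) => [->|[v0 hv0]]; first by rewrite cards0 F0.
case: (@arg_minnP _ v0 (mem V) (deg V) hv0) => v hv0' hmin.
have hv : v \in V := hv0'.
set d := deg V v.
set Nb := [set y in V | e v y].
set Nv := v |: Nb.
set V' := V :\: Nv.
have vNb : v \notin Nb by rewrite inE eirr andbF.
have cNv : #|Nv| = d.+1 by rewrite cardsU1 vNb.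
have sNv : Nv \subset V.
  by apply/subsetP => x; rewrite !inE => /orP [/eqP ->|/andP []].
have cV' : #|V'| = #|V| - d.+1.
  by rewrite cardsD (setIidPr sNv) cNv.
have dV : d.+1 <= #|V| by rewrite -cNv; apply: subset_leq_card.
case: l ha => [|l] ha.
  exfalso; have : #|[set v]| <= 0.
    apply: ha; first by rewrite sub1set.
    by move=> x y; rewrite !inE => /eqP -> /eqP ->; rewrite eirr.
  by rewrite cards1.
have ha' : alpha_le V' l.
  move=> I hI hind.
  have vI : v \notin I.
    apply/negP => /(subsetP hI); by rewrite !inE eqxx.
  have := ha (v |: I).
  rewrite cardsU1 vI add1n ltnS; apply.
    apply/subsetP => x; rewrite in_setU1 => /orP [/eqP ->|/(subsetP hI)]; first exact: hv.
    by rewrite inE => /andP [].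
  have nadj : forall y, y \in I -> ~~ e v y.
    move=> y /(subsetP hI); rewrite !inE negb_or => /andP [/andP [_ hy] hyV].
    by apply: contra hy => hvy; rewrite hyV hvy.
  move=> x y; rewrite !in_setU1 => /orP [/eqP ->|hx] /orP [/eqP ->|hy].
  - by rewrite eirr.
  - exact: nadj.
  - by rewrite esym; apply: nadj.
  - exact: hind.
have IH' := IH V' l ltac:(lia) ha'.
set A := [set p : T * T | [&& p.1 \in V', p.2 \in V' & e p.1 p.2]].
set B := [set p : T * T | [&& p.1 \in Nv, p.2 \in V & e p.1 p.2]].
have hAB : #|A| + #|B| <= Ecard V.
  rewrite -cardsUI.
  have -> : A :&: B = set0.
    apply/setP => p; rewrite in_setI !in_set inE.
    apply/negP => /andP [/and3P [h1 _ _] /and3P [h2 _ _]].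
    by move: h1; rewrite h2.
  rewrite cards0 addn0; apply: subset_leq_card; apply/subsetP => p.
  rewrite in_setU !in_set => /orP [/and3P [h1 h2 ->]|/and3P [h1 -> ->]].
    by move: h1 h2 => /andP [_ ->] /andP [_ ->].
  by move: h1 => /orP [|/andP [-> _]] //; rewrite inE => /eqP ->; rewrite hv.
have hB : d.+1 * d <= #|B|.
  have -> : #|B| = \sum_(x in Nv) deg V x.
    rewrite -sum1_card.
    rewrite (eq_bigl (fun p : T * T => (p.1 \in Nv) && ((p.2 \in V) && e p.1 p.2))); last first.
      by move=> p; rewrite !inE.
    rewrite -(pair_big_dep (fun x => x \in Nv) (fun x y => (y \in V) && e x y) (fun _ _ => 1)) /=.
    apply: eq_bigr => x _; rewrite /deg -sum1_card. apply: eq_bigl => y; by rewrite inE.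
  rewrite -cNv -sum_nat_const; apply: leq_sum => x hx.
  apply: hmin; exact: (subsetP sNv).
have hA : Ecard V' = #|A| by [].
case: l ha ha' IH' => [|l] ha ha' IH'.
  have V'0 : #|V'| = 0.
    case: (set_0Vmem V') => [->|[x hx]]; first by rewrite cards0.
    exfalso; have : #|[set x]| <= 0.
      apply: ha'; first by rewrite sub1set.
      by move=> a b; rewrite !inE => /eqP -> /eqP ->; rewrite eirr.
    by rewrite cards1.
  have hVd : #|V| = d.+1 by lia.
  rewrite hVd F1 bin2_double; lia.
have := F_rec (l := l.+1) isT (s := d.+1) dV.
rewrite -cV' => h.
have := bin2_double d.
lia.
Qed.
End Turan.

Lemma subset_card_exact (T : finType) (I : {set T}) r : r <= #|I| ->
  exists2 S : {set T}, S \subset I & #|S| = r.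
Proof.
move=> hr; exists [set x in take r (enum I)].
  apply/subsetP => x; rewrite inE => /mem_take; by rewrite mem_enum.
rewrite cardsE; have /card_uniqP -> : uniq (take r (enum I)) by apply: take_uniq; apply: enum_uniq.
by rewrite size_take -cardE; case: ltnP => //; lia.
Qed.


Section DrawWord.
Variables (k m n : nat) (d : drawing k m n).

Definition isA (v : bvert m n) : bool := if v is inl _ then true else false.

Lemma pos_inj : injective (pos d).
Proof.
move=> u v; rewrite /pos => /eqP; rewrite -[_ == _]/(enum_rank (d.1 u) == enum_rank (d.1 v)).
by move/eqP/enum_rank_inj/perm_inj.
Qed.

Definition s0 (S : {set 'I_n}) : seq (bvert m n) := map inl (enum 'I_m) ++ map inr (enum S).
Definition srt S := sort (fun u v => pos d u <= pos d v) (s0 S).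
Definition wd S := map isA (srt S).

Lemma perm_srt S : perm_eq (srt S) (s0 S).
Proof. by rewrite /srt perm_sort. Qed.

Lemma size_wd S : size (wd S) = m + #|S|.
Proof. by rewrite size_map /srt size_sort size_cat !size_map -enumT size_enum_ord cardE. Qed.

Lemma count_wd S : count id (wd S) = m.
Proof.
rewrite count_map (seq.permP (perm_srt S)) count_cat !count_map.
rewrite (eq_count (a2 := predT)) // count_predT -enumT size_enum_ord.
by rewrite (eq_count (a2 := pred0)) // count_pred0 addn0.
Qed.

Lemma uniq_srt S : uniq (srt S).
Proof.
have h1 : uniq (map inl (enum 'I_m) : seq (bvert m n)).
  by rewrite map_inj_uniq ?enum_uniq // => ? ? [].
have h2 : uniq (map inr (enum S) : seq (bvert m n)).
  by rewrite map_inj_uniq ?enum_uniq // => ? ? [].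
have h3 : ~~ has (mem (map inl (enum 'I_m) : seq (bvert m n))) (map inr (enum S)).
  by apply/hasPn => v /mapP [b _ ->]; apply/mapP => [[a _]].
by rewrite /srt sort_uniq cat_uniq h1 h2 h3.
Qed.

Lemma sorted_srt S : sorted (fun u v => pos d u <= pos d v) (srt S).
Proof. apply: sort_sorted => u v; exact: leq_total. Qed.

Lemma srt_mono S x0 i j : i < size (srt S) -> j < size (srt S) -> i < j ->
  pos d (nth x0 (srt S) i) < pos d (nth x0 (srt S) j).
Proof.
move=> hi hj hij.
have h := @sorted_ltn_nth _ (fun u v => pos d u <= pos d v)
   (fun y x z h1 h2 => leq_trans h1 h2) x0 _ (sorted_srt S) i j hi hj hij.
rewrite ltn_neqAle h andbT; apply/negP => /eqP /pos_inj /eqP.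
rewrite nth_uniq ?uniq_srt //; lia.
Qed.

Section G.
Variables (S : {set 'I_n}) (x0 : bvert m n).
Let L := size (srt S).
Let g i := pos d (nth x0 (srt S) i).

Lemma g_lt i j : i < L -> j < L -> (g i < g j) = (i < j).
Proof.
move=> hi hj; case: (ltngtP i j) => h.
- exact: srt_mono.
- apply/negbTE; rewrite -leqNgt; apply: ltnW; exact: srt_mono.
- by rewrite h ltnn.
Qed.

Lemma g_min i j : i < L -> j < L -> minn (g i) (g j) = g (minn i j).
Proof. by move=> hi hj; rewrite /minn g_lt //; case: ifP. Qed.

Lemma g_max i j : i < L -> j < L -> maxn (g i) (g j) = g (maxn i j).
Proof. by move=> hi hj; rewrite /maxn g_lt //; case: ifP. Qed.

Lemma xc_g i j i' j' : i < L -> j < L -> i' < L -> j' < L ->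
  xc (i, j) (i', j') = xc (g i, g j) (g i', g j').
Proof.
move=> hi hj hi' hj'; rewrite /xc /= !g_min // !g_max // !g_lt //;
  rewrite /minn /maxn; repeat case: ifP => _ //.
Qed.
End G.

Definition adjb (b b' : 'I_n) : bool :=
  [exists e1 : bedge m n, exists e2 : bedge m n,
     crossb d e1 e2 && (((e1.2 == b) && (e2.2 == b')) || ((e1.2 == b') && (e2.2 == b)))].

Lemma good_cross (S : {set 'I_n}) : 0 < k -> 0 < m -> Good k (wd S) ->
  exists b b', [/\ b \in S, b' \in S & adjb b b'].
Proof.
move=> hk hm H.
set s := srt S.
pose x0 : bvert m n := inl (Ordinal hm).
pose p i j := match nth x0 s i, nth x0 s j with
              | inl a, inr b => val (d.2 (a, b)) | _, _ => 0 end.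
have hp : forall i j, p i j < k.
  by move=> i j; rewrite /p; case: (nth x0 s i) => a; case: (nth x0 s j) => b //; exact: ltn_ord.
case: (H p hp) => i [j [i' [j' [hb hw hx hpe]]]].
have sw : size (wd S) = size s by rewrite size_map.
move: hb hw; rewrite sw => /and4P [hi hj hi' hj'].
rewrite /wd !(nth_map x0) // => /and4P [wi wj wi' wj'].
have inS : forall t b, t < size s -> nth x0 s t = inr b -> b \in S.
  move=> t b ht hb; have := mem_nth x0 ht; rewrite hb (perm_mem (perm_srt S)) mem_cat.
  case/orP => /mapP [c]; rewrite ?mem_enum => hc; first by [].
  by case => ->.
rewrite (@xc_g S x0) // in hx.
move: hpe wi wj wi' wj' hx; rewrite /p -/s.
case Ei: (nth x0 s i) => [a|//]; case Ej: (nth x0 s j) => [//|b].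
case Ei': (nth x0 s i') => [a'|//]; case Ej': (nth x0 s j') => [//|b'].
move=> hpe0 _ _ _ _ hx; have hpe : d.2 (a, b) = d.2 (a', b') by apply: val_inj.
exists b, b'; split; [exact: (inS j)|exact: (inS j')|].
apply/existsP.
have hl : forall t c, nth x0 s t = c -> pos d c = pos d (nth x0 s t) by move=> ? ? ->.
move: hx; rewrite /xc /= => /orP [hx|hx].
  exists (a, b); apply/existsP; exists (a', b'); rewrite /crossb /Defs.lo /Defs.hi /= hpe eqxx /=.
  by rewrite hx !eqxx.
exists (a', b'); apply/existsP; exists (a, b); rewrite /crossb /Defs.lo /Defs.hi /= hpe eqxx /=.
by rewrite hx !eqxx orbT.
Qed.

Lemma adjb_sym : symmetric adjb.
Proof.
move=> b b'; rewrite /adjb; apply/existsP/existsP => [][e1 /existsP [e2 h]]; exists e1; apply/existsP; exists e2;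
  by move: h; rewrite orbC.
Qed.

Lemma adjb_irr : irreflexive adjb.
Proof.
move=> b; apply/negbTE; rewrite /adjb; apply/negP => /existsP [e1] /existsP [e2].
rewrite orbb => /andP [/andP [_ hc] /andP [/eqP h1 /eqP h2]].
move: hc; rewrite /Defs.lo /Defs.hi h1 h2; lia.
Qed.

Lemma Ecard_le : Ecard adjb [set: 'I_n] <= 2 * crossings d.
Proof.
set X := [set ef : bedge m n * bedge m n | crossb d ef.1 ef.2].
pose f1 (ef : bedge m n * bedge m n) := (ef.1.2, ef.2.2).
pose f2 (ef : bedge m n * bedge m n) := (ef.2.2, ef.1.2).
rewrite /Ecard /crossings -/X.
apply: (@leq_trans #|f1 @: X :|: f2 @: X|).
  apply: subset_leq_card; apply/subsetP => [[b b']]; rewrite !inE /= => /existsP [e1 /existsP [e2]].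
  move=> /andP [hc /orP [/andP [/eqP h1 /eqP h2]|/andP [/eqP h1 /eqP h2]]]; apply/orP.
    by left; apply/imsetP; exists (e1, e2); rewrite ?inE //= /f1 /= h1 h2.
  by right; apply/imsetP; exists (e1, e2); rewrite ?inE //= /f2 /= h1 h2.
apply: (leq_trans (leq_card_setU _ _)).
by rewrite mul2n -addnn leq_add // leq_imset_card.
Qed.

End DrawWord.

Lemma main_gen k l : 0 < k -> fincheck k k.+1 l.+1 -> forall n, F n l <= nu k k.+1 n.
Proof.
move=> hk hf n; rewrite /nu.
apply: (big_ind (fun x => F n l <= x)).
- apply: leq_trans (F_le_sq l n) _; rewrite -mulnn; nia.
- by move=> x y hx hy; rewrite leq_min hx hy.
move=> dr _.
have ha : alpha_le (adjb dr) [set: 'I_n] l.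
  move=> I _ hind; rewrite leqNgt; apply/negP => hI.
  case: (subset_card_exact hI) => S hSI hS.
  have hg : Good k (wd dr S).
    apply: (fincheckP hf); first by rewrite size_wd hS.
    exact: count_wd.
  case: (good_cross hk (ltn0Sn k) hg) => b [b' [hb hb' hadj]].
  by move: (hind b b' (subsetP hSI _ hb) (subsetP hSI _ hb')); rewrite hadj.
have := turan (adjb_sym dr) (adjb_irr dr) (leqnn _) ha.
rewrite cardsT card_ord => h.
have := Ecard_le dr; lia.
Qed.


Lemma fc2 : fincheck 2 3 3. Proof. vm_cast_no_check (erefl true). Qed.
Lemma fc3 : fincheck 3 4 5. Proof. vm_cast_no_check (erefl true). Qed.
Lemma fc4 : fincheck 4 5 7. Proof. vm_cast_no_check (erefl true). Qed.
Lemma fc5 : fincheck 5 6 10. Proof. vm_cast_no_check (erefl true). Qed.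
Lemma fc6 : fincheck 6 7 13. Proof. vm_cast_no_check (erefl true). Qed.

Unset Implicit Arguments.
Theorem lemma16 (k n : nat) :
  2 <= k <= 6 -> 0 < n ->
  let l := (k.+1 ^ 2) %/ 4 in
  let q := n %% l in
  q * 'C((n - q) %/ l + 1, 2) + (l - q) * 'C((n - q) %/ l, 2) <= nu k k.+1 n.
Proof.
move=> hk hn; cbv zeta.
have : k = 2 \/ k = 3 \/ k = 4 \/ k = 5 \/ k = 6 by lia.
case=> [->|[->|[->|[->|->]]]]; rewrite F_formula //.
- by rewrite (_ : 3 ^ 2 %/ 4 = 2) //; apply: (@main_gen 2 2 isT fc2).
- by rewrite (_ : 4 ^ 2 %/ 4 = 4) //; apply: (@main_gen 3 4 isT fc3).
- by rewrite (_ : 5 ^ 2 %/ 4 = 6) //; apply: (@main_gen 4 6 isT fc4).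
- by rewrite (_ : 6 ^ 2 %/ 4 = 9) //; apply: (@main_gen 5 9 isT fc5).
- by rewrite (_ : 7 ^ 2 %/ 4 = 12) //; apply: (@main_gen 6 12 isT fc6).
Qed.
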